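(* Let $d_1\le\dots\le d_n$ be a \textsc{2-Visits} instance with discretized sequence $\langle a_1,\dots,a_n\rangle$. For every $i\in[n]$, in any feasible schedule at most $n-i$ primary visits occur at positions strictly greater than $a_i$.
   Context: \textsc{2-Visits} (primary/secondary formulation): given non-decreasing positive integers $d_1\le\dots\le d_n$, a feasible schedule is a schedule of length $2n$ (each position $1,\dots,2n$ holds one visit) containing one primary and one secondary visit of each node $i\in[n]$, such that the primary visit of $i$ is at position at most $d_i$, and the secondary visit of $i$ is either before its primary visit or at most $d_i$ positions after its primary visit. The discretized sequence is defined by $a_n=d_n$ and $a_i=\min\{a_{i+1}-1,d_i\}$ for $i<n$. *)

(* Defs.v *)
From mathcomp Require Import all_boot.
Set Implicit Arguments. Unset Strict Implicit. Unset Printing Implicit Defensive.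

(* Nodes are 1..n; positions are 1..2n. d : nat -> nat gives the deadlines. *)

(* Discretized sequence: a_n = d_n, a_i = min(a_{i+1} - 1, d_i) for i < n.
   disc_aux d n k = a_{n-k}. Truncated subtraction on nat: a value that would be
   <= 0 becomes 0, which does not affect "positions strictly greater than a_i"
   since positions are >= 1. *)
Fixpoint disc_aux (d : nat -> nat) (n k : nat) : nat :=
  match k with
  | 0 => d n
  | k'.+1 => minn (disc_aux d n k' - 1) (d (n - k'.+1))
  end.

Definition disc (d : nat -> nat) (n i : nat) : nat := disc_aux d n (n - i).

Definition instance (n : nat) (d : nat -> nat) : Prop :=
  (forall i, 1 <= i <= n -> 0 < d i) /\
  (forall i j, 1 <= i <= j -> j <= n -> d i <= d j).

(* A schedule: prim i / sec i are the positions of the primary / secondary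
   visit of node i. *)
Definition feasible (n : nat) (d : nat -> nat) (prim sec : nat -> nat) : Prop :=
  (forall i, 1 <= i <= n -> 1 <= prim i <= 2 * n /\ 1 <= sec i <= 2 * n) /\
  (forall i j, 1 <= i <= n -> 1 <= j <= n -> i != j -> prim i <> prim j) /\
  (forall i j, 1 <= i <= n -> 1 <= j <= n -> i != j -> sec i <> sec j) /\
  (forall i j, 1 <= i <= n -> 1 <= j <= n -> prim i <> sec j) /\
  (forall i, 1 <= i <= n -> prim i <= d i) /\
  (forall i, 1 <= i <= n -> sec i < prim i \/ sec i <= prim i + d i).

(* Main.v *)
Require Import Defs.
From mathcomp Require Import all_boot.
From mathcomp Require Import zify.

Lemma disc_step d n i : i < n -> disc d n i = minn (disc d n i.+1 - 1) (d i).
Proof.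
move=> lt; rewrite /disc.
have -> : n - i = (n - i.+1).+1 by lia.
rewrite /=; have -> : n - (n - i.+1).+1 = i by lia.
by [].
Qed.

Lemma card_gt n i :
  #|[set j : 'I_n.+1 | i < (j : nat)]| <= n - i.
Proof.
apply: (@leq_trans #|[set (inord (val k + i.+1) : 'I_n.+1) | k : 'I_(n - i) in 'I_(n - i)]|).
  apply: subset_leq_card; apply/subsetP => j; rewrite inE => ij.
  have jn := ltn_ord j.
  have H : j - i.+1 < n - i by lia.
  apply/imsetP; exists (Ordinal H) => //.
  apply: val_inj; rewrite /= inordK; lia.
by apply: (leq_trans (leq_imset_card _ _)); rewrite card_ord.
Qed.

Theorem lemma3 (n : nat) (d : nat -> nat) (prim sec : nat -> nat) :
  instance n d -> feasible n d prim sec ->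
  forall i, 1 <= i <= n ->
    #|[set j : 'I_n.+1 | (0 < (j : nat)) && (disc d n i < prim j)]| <= n - i.
Proof.
move=> [dpos dmon] [rng [pinj [_ [_ [pd _]]]]].
suff: forall k, k < n -> 
  #|[set j : 'I_n.+1 | (0 < (j : nat)) && (disc d n (n - k) < prim j)]| <= k.
  move=> H i /andP[i1 iN].
  have := H (n - i); have -> : n - (n - i) = i by lia. apply; lia.
elim=> [|k IH] kn.
  rewrite subn0 leqn0 cards_eq0; apply/eqP/setP => j; rewrite !inE.
  apply/negbTE; rewrite negb_and -leqNgt /disc subnn /=.
  case: (posnP j) => [->//|j0]; apply/orP; right.
  have jn := ltn_ord j.
  have := pd j; have := dmon j n; lia.
set i := n - k.+1.
have ilt : i < n by lia.
have IH' := IH (ltnW kn); rewrite (_ : n - k = i.+1) in IH'; last by lia.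
rewrite disc_step //.
case: (leqP (d i) (disc d n i.+1 - 1)) => h.
  
  have cg := card_gt n i; rewrite (_ : n - i = k.+1) in cg; last by lia.
  apply: leq_trans cg.
  apply: subset_leq_card; apply/subsetP => j; rewrite !inE => /andP[j0 hj].
  rewrite ltnNge; apply/negP => ji.
  have jn := ltn_ord j.
  have := pd j; have := dmon j i; lia.

set a := disc d n i.+1.
set A := [set j : 'I_n.+1 | (0 < (j : nat)) && (a < prim j)].
set B := [set j : 'I_n.+1 | (0 < (j : nat)) && (prim j == a)].
have hB : #|B| <= 1.
  apply/card_le1_eqP => x y; rewrite !inE => /andP[x0 /eqP px] /andP[y0 /eqP py].
  apply/eqP; apply/negPn/negP => xy.
  have := ltn_ord x; have := ltn_ord y => yn xn.
  apply: (pinj x y); try lia; try congruence; by rewrite eq_sym.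
apply: (@leq_trans #|A :|: B|).
  apply: subset_leq_card; apply/subsetP => j; rewrite !inE => /andP[j0 hj].
  rewrite j0 /=; case: (ltngtP a (prim j)) => [//|hlt|e]; [lia|by apply/orP; right; apply/eqP].
have hA : #|A| <= k := IH'. have := cardsU A B; lia.
Qed.
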